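(* Let $V$ be a real vector space with a non-degenerate inner product $(\cdot,\cdot)$ of signature $(p,q)$. Decompose $V=V_-\oplus V_+$ as an orthogonal direct sum of a positive definite subspace $V_+$ and its negative definite orthogonal complement $V_-$, let $\varrho_\pm:V\to V_\pm$ be the orthogonal projections, and let $\Phi=\varrho_+-\varrho_-$. Let $A:V\to V$ be self-adjoint with $A^3=0$. Then: \begin{enumerate} \item $\mathrm{Im}(A^2)$ is totally isotropic; \item $\mathrm{rank}(A\Phi A^2)=\mathrm{rank}(A^2\Phi A^2)=\mathrm{rank}(A^2)$, and $A$ restricts to an isomorphism $\mathrm{Im}(A\Phi A^2)\to\mathrm{Im}(A^2)$; \item the restriction of $(\cdot,\cdot)$ to $\mathrm{Im}(A\Phi A^2)$ is non-degenerate; \item $\mathrm{Im}(A^2)$ and $\mathrm{Im}(A\Phi A^2)$ are orthogonal with respect to $(\cdot,\cdot)$. \end{enumerate} *)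

(* Defs.v *)
(* A finite-dimensional real vector space V = R^n is modelled
   by column vectors 'cV[R]_n; linear maps are n x n matrices acting on the
   left (x |-> M *m x), so composition agrees with the paper's notation. *)
From HB Require Import structures.
From mathcomp Require Import all_boot all_order all_algebra.
Set Implicit Arguments. Unset Strict Implicit. Unset Printing Implicit Defensive.
Import Order.TTheory GRing.Theory Num.Theory.
Local Open Scope ring_scope.

Section Defs.
Variables (R : realFieldType) (n : nat).

Definition ipG (G : 'M[R]_n) (x y : 'cV[R]_n) : R := (x^T *m G *m y) 0 0.

(* x lies in the image (column space) of the linear map M *)
Definition inIm (x : 'cV[R]_n) (M : 'M[R]_n) : bool := (x^T <= M^T)%MS.

Definition nondeg_form (G : 'M[R]_n) : Prop :=
  forall x : 'cV[R]_n, (forall y, ipG G x y = 0) -> x = 0.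

Definition totally_isotropic (G M : 'M[R]_n) : Prop :=
  forall x y, inIm x M -> inIm y M -> ipG G x y = 0.

Definition nondeg_on (G M : 'M[R]_n) : Prop :=
  forall x, inIm x M -> (forall y, inIm y M -> ipG G x y = 0) -> x = 0.

Definition orthogonal_Im (G M N : 'M[R]_n) : Prop :=
  forall x y, inIm x M -> inIm y N -> ipG G x y = 0.

Definition self_adjoint (G A : 'M[R]_n) : Prop :=
  forall x y, ipG G (A *m x) y = ipG G x (A *m y).

Definition restricts_iso (A M N : 'M[R]_n) : Prop :=
  [/\ (forall x, inIm x M -> inIm (A *m x) N),
      (forall x, inIm x M -> A *m x = 0 -> x = 0) &
      (forall y, inIm y N -> exists2 x, inIm x M & A *m x = y)].

End Defs.

(* Main.v *)
Require Import Defs.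
From HB Require Import structures.
From mathcomp Require Import all_boot all_order all_algebra.
Import Order.TTheory GRing.Theory Num.Theory.
Local Open Scope ring_scope.

Lemma inImP (R : realFieldType) n (x : 'cV[R]_n) M :
  reflect (exists v, x = M *m v) (inIm x M).
Proof.
apply: (iffP submxP) => [[D hD]|[v ->]].
  by exists D^T; rewrite -[x]trmxK hD trmx_mul trmxK.
by exists v^T; rewrite trmx_mul.
Qed.

Lemma inIm_mul (R : realFieldType) n (M : 'M[R]_n) v : inIm (M *m v) M.
Proof. by apply/inImP; exists v. Qed.

Lemma ipG_sym {R : realFieldType} {n} {G : 'M[R]_n} (x y : 'cV[R]_n) :
  G^T = G -> ipG G x y = ipG G y x.
Proof.
move=> hG; rewrite /ipG -[in LHS](trmxK (x^T *m G *m y)) mxE.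
by rewrite !trmx_mul !trmxK hG mulmxA.
Qed.

Lemma ipG0r (R : realFieldType) n (G : 'M[R]_n) x : ipG G x 0 = 0.
Proof. by rewrite /ipG mulmx0 mxE. Qed.

Lemma ipGDr (R : realFieldType) n (G : 'M[R]_n) x y z :
  ipG G x (y + z) = ipG G x y + ipG G x z.
Proof. by rewrite /ipG mulmxDr mxE. Qed.

Lemma ipGBr (R : realFieldType) n (G : 'M[R]_n) x y z :
  ipG G x (y - z) = ipG G x y - ipG G x z.
Proof. by rewrite /ipG mulmxBr !mxE. Qed.

Lemma ipGDl (R : realFieldType) n (G : 'M[R]_n) x y z :
  ipG G (x + y) z = ipG G x z + ipG G y z.
Proof. by rewrite /ipG linearD /= !mulmxDl mxE. Qed.

Lemma ipGBl (R : realFieldType) n (G : 'M[R]_n) x y z :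
  ipG G (x - y) z = ipG G x z - ipG G y z.
Proof. by rewrite /ipG linearB /= !mulmxBl !mxE. Qed.

Theorem lemma4p5 (R : realFieldType) (n : nat) (G : 'M[R]_n)
  (Vp Vm rhop rhom A : 'M[R]_n)
  (* non-degenerate symmetric inner product *)
  (HGsym : G^T = G) (HGnd : nondeg_form G)
  (* V_+ = Im Vp positive definite *)
  (Hpos : forall x, inIm x Vp -> x != 0 -> 0 < ipG G x x)
  (* V_- = Im Vm is the orthogonal complement of V_+ *)
  (Hperp : forall y, inIm y Vm <-> (forall x, inIm x Vp -> ipG G x y = 0))
  (* V_- is negative definite *)
  (Hneg : forall x, inIm x Vm -> x != 0 -> ipG G x x < 0)
  (* rho_+, rho_- are the projections of V = V_- (+) V_+ onto V_+, V_- *)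
  (Hrhop : forall x, inIm (rhop *m x) Vp)
  (Hrhom : forall x, inIm (rhom *m x) Vm)
  (Hrho : forall x : 'cV[R]_n, rhop *m x + rhom *m x = x)
  (* A self-adjoint with A^3 = 0 *)
  (HA : self_adjoint G A) (HA3 : A *m A *m A = 0) :
  let Phi := rhop - rhom in
  let A2 := A *m A in
  [/\ totally_isotropic G A2,
      [/\ \rank (A *m Phi *m A2) = \rank A2,
          \rank (A2 *m Phi *m A2) = \rank A2 &
          restricts_iso A (A *m Phi *m A2) A2],
      nondeg_on G (A *m Phi *m A2) &
      orthogonal_Im G A2 (A *m Phi *m A2)].
Proof.
move=> Phi A2; rewrite {}/A2.
have Hphi : forall u, u != 0 -> 0 < ipG G u (Phi *m u).
  move=> u u0.
  have o : ipG G (rhop *m u) (rhom *m u) = 0 :=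
    (Hperp (rhom *m u)).1 (Hrhom u) (rhop *m u) (Hrhop u).
  rewrite -{1}(Hrho u) /Phi mulmxBl ipGDl !ipGBr (ipG_sym (rhom *m u) _ HGsym) o.
  rewrite subr0 add0r.
  have [p0|p0] := eqVneq (rhop *m u) 0.
    have m0 : rhom *m u != 0.
      apply: contraNneq u0 => m0; by rewrite -(Hrho u) p0 m0 addr0.
    by rewrite p0 /ipG trmx0 !mul0mx mxE sub0r oppr_gt0 Hneg.
  have [m0|m0] := eqVneq (rhom *m u) 0.
    by rewrite m0 ipG0r subr0 Hpos.
  by rewrite subr_gt0 (lt_trans (Hneg _ (Hrhom u) m0) (Hpos _ (Hrhop u) p0)).
have Hker : forall v : 'cV[R]_n, A *m A *m Phi *m (A *m A) *m v = 0 -> A *m A *m v = 0.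
  move=> v h; have [//|nz] := eqVneq (A *m A *m v) 0; exfalso.
  have := Hphi _ nz; rewrite -mulmxA HA HA.
  have -> : A *m (A *m (Phi *m (A *m (A *m v)))) = A *m A *m Phi *m (A *m A) *m v.
    by rewrite !mulmxA.
  by rewrite h ipG0r ltxx.
have Hinj : forall x : 'cV[R]_n, inIm x (A *m Phi *m (A *m A)) -> A *m x = 0 -> x = 0.
  move=> x /inImP [v ->] h.
  have : A *m A *m v = 0 by apply: Hker; rewrite -h !mulmxA.
  by move=> h2; rewrite -!mulmxA (mulmxA A A v) h2 !mulmx0.
have Hrk2 : \rank (A *m A *m Phi *m (A *m A)) = \rank (A *m A).
  rewrite -mxrank_tr -(mxrank_tr (A *m A)) trmx_mul.
  rewrite -[RHS](mxrank_mul_ker (A *m A)^T (A *m A *m Phi)^T).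
  suff -> : ((A *m A)^T :&: kermx (A *m A *m Phi)^T)%MS = 0 by rewrite mxrank0 addn0.
  apply/eqP; rewrite -submx0; apply/row_subP => i.
  set r := row i _.
  have r1 : (r <= (A *m A)^T)%MS := submx_trans (row_sub i _) (capmxSl _ _).
  have r2 : (r <= kermx (A *m A *m Phi)^T)%MS := submx_trans (row_sub i _) (capmxSr _ _).
  rewrite sub_kermx in r2; case/submxP: r1 => D hD.
  rewrite submx0 hD; apply/eqP.
  have : A *m A *m D^T = 0.
    apply: Hker; apply: trmx_inj; rewrite trmx0 -(eqP r2) hD !trmx_mul !trmxK.
    by rewrite !mulmxA.
  by move/(congr1 trmx); rewrite trmx_mul trmxK trmx0.
have HrkB : \rank (A *m Phi *m (A *m A)) = \rank (A *m A).
  apply/eqP; rewrite eqn_leq mxrankM_maxr /=.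
  by rewrite -{1}Hrk2 -!mulmxA mxrankM_maxr.
have Hsurj : forall y : 'cV[R]_n, inIm y (A *m A) ->
    exists2 x, inIm x (A *m Phi *m (A *m A)) & A *m x = y.
  move=> y hy.
  have hs : ((A *m A *m Phi *m (A *m A))^T <= (A *m A)^T)%MS.
    by rewrite -mulmxA trmx_mul submxMl.
  have hs2 : ((A *m A)^T <= (A *m A *m Phi *m (A *m A))^T)%MS.
    by rewrite -(mxrank_leqif_sup hs).2 !mxrank_tr Hrk2.
  have : inIm y (A *m A *m Phi *m (A *m A)) by exact: submx_trans hy hs2.
  case/inImP => v ->; exists (A *m Phi *m (A *m A) *m v); first exact: inIm_mul.
  by rewrite !mulmxA.
split.
- move=> x y /inImP [u ->] /inImP [w ->].
  rewrite -mulmxA HA HA.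
  by rewrite !mulmxA HA3 !mul0mx ipG0r.
- split => //; split => //.
  move=> x /inImP [v ->]; apply/inImP; exists (Phi *m (A *m A) *m v).
  by rewrite !mulmxA.
- move=> x hx hy.
  have hx' := hx; case/inImP: hx' => v hv.
  set z := Phi *m (A *m A) *m v.
  have hAx : A *m x = A *m A *m z by rewrite hv /z !mulmxA.
  apply: Hinj => //; rewrite hAx.
  have [//|nz] := eqVneq (A *m A *m z) 0; exfalso.
  have := hy (A *m (Phi *m (A *m A *m z))).
  rewrite -HA hAx.
  have -> : inIm (A *m (Phi *m (A *m A *m z))) (A *m Phi *m (A *m A)).
    by apply/inImP; exists z; rewrite !mulmxA.
  move=> /(_ isT) h0.
  by have := Hphi _ nz; rewrite h0 ltxx.
- move=> x y /inImP [u ->] /inImP [w ->].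
  rewrite -mulmxA HA HA.
  by rewrite !mulmxA HA3 !mul0mx ipG0r.
Qed.
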